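(* Let $G=\mathrm{SL}_2(\mathbb{R})$ act continuously (the map $G\times X\to X$ is continuous) by isometries on a metric space $X$, and let $x_0\in X$. Then either $x_0$ is fixed by all of $G$, or the stabilizer $G_{x_0}$ is compact. *)

(* Defs.v *)
From Stdlib Require Import Reals Lra List.
Open Scope R_scope.

(** SL_2(R): real 2x2 matrices [[a,b],[c,d]] with determinant 1. *)
Record SL2 := mkSL2 {
  sa : R; sb : R; sc : R; sd : R;
  sdet : sa * sd - sb * sc = 1 }.

Lemma SL2_mul_det (g h : SL2) :
  (sa g * sa h + sb g * sc h) * (sc g * sb h + sd g * sd h)
  - (sa g * sb h + sb g * sd h) * (sc g * sa h + sd g * sc h) = 1.
Proof.
  destruct g as [a b c d Hg], h as [a' b' c' d' Hh]; simpl.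
  replace ((a * a' + b * c') * (c * b' + d * d') - (a * b' + b * d') * (c * a' + d * c'))
    with ((a * d - b * c) * (a' * d' - b' * c')) by ring.
  rewrite Hg, Hh; ring.
Qed.

Definition SL2_mul (g h : SL2) : SL2 :=
  mkSL2 (sa g * sa h + sb g * sc h) (sa g * sb h + sb g * sd h)
        (sc g * sa h + sd g * sc h) (sc g * sb h + sd g * sd h)
        (SL2_mul_det g h).

Lemma SL2_one_det : 1 * 1 - 0 * 0 = 1.
Proof. ring. Qed.

Definition SL2_one : SL2 := mkSL2 1 0 0 1 SL2_one_det.

(** Distance on SL_2(R) inducing its usual topology (subspace of R^4). *)
Definition SL2_dist (g h : SL2) : R :=
  Rmax (Rmax (Rabs (sa g - sa h)) (Rabs (sb g - sb h)))
       (Rmax (Rabs (sc g - sc h)) (Rabs (sd g - sd h))).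

Definition SL2_open (U : SL2 -> Prop) : Prop :=
  forall g, U g -> exists eps, eps > 0 /\ forall h, SL2_dist g h < eps -> U h.

Definition SL2_compact (S : SL2 -> Prop) : Prop :=
  forall (I : Type) (U : I -> SL2 -> Prop),
    (forall i, SL2_open (U i)) ->
    (forall g, S g -> exists i, U i g) ->
    exists l : list I, forall g, S g -> exists i, In i l /\ U i g.

Record is_metric {X : Type} (dist : X -> X -> R) : Prop := {
  dist_nonneg : forall x y, 0 <= dist x y;
  dist_eq0 : forall x y, dist x y = 0 <-> x = y;
  dist_sym : forall x y, dist x y = dist y x;
  dist_tri : forall x y z, dist x z <= dist x y + dist y z }.

Record is_cont_isom_action {X : Type} (dist : X -> X -> R)
    (act : SL2 -> X -> X) : Prop := {
  act_one : forall x, act SL2_one x = x;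
  act_mul : forall g h x, act (SL2_mul g h) x = act g (act h x);
  act_isom : forall g x y, dist (act g x) (act g y) = dist x y;
  (* joint continuity of G x X -> X (product topology) *)
  act_cont : forall g x eps, eps > 0 -> exists delta, delta > 0 /\
      forall h y, SL2_dist g h < delta -> dist x y < delta ->
        dist (act g x) (act h y) < eps }.

Definition stabilizer {X : Type} (act : SL2 -> X -> X) (x0 : X) : SL2 -> Prop :=
  fun g => act g x0 = x0.

(* Main.v *)
Require Import Defs.
From Stdlib Require Import Reals List Lra Lia Psatz Classical ClassicalEpsilon ProofIrrelevance.
Open Scope R_scope.

Lemma SL2_ext (g h : SL2) : sa g = sa h -> sb g = sb h -> sc g = sc h -> sd g = sd h -> g = h.
Proof.
  destruct g as [a b c d Hg], h as [a' b' c' d' Hh]; simpl; intros; subst.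
  f_equal; apply proof_irrelevance.
Qed.

Lemma abs_le_inv a b : Rabs a <= b -> - b <= a <= b.
Proof. unfold Rabs; destruct (Rcase_abs a); lra. Qed.

Lemma abs_lt_inv a b : Rabs a < b -> - b < a < b.
Proof. unfold Rabs; destruct (Rcase_abs a); lra. Qed.

Lemma abs_le a b : - b <= a <= b -> Rabs a <= b.
Proof. unfold Rabs; destruct (Rcase_abs a); lra. Qed.

Lemma abs_lt a b : - b < a < b -> Rabs a < b.
Proof. unfold Rabs; destruct (Rcase_abs a); lra. Qed.

Lemma SL2_dist_lt g h e : Rabs (sa g - sa h) < e -> Rabs (sb g - sb h) < e ->
  Rabs (sc g - sc h) < e -> Rabs (sd g - sd h) < e -> SL2_dist g h < e.
Proof. intros. unfold SL2_dist. repeat apply Rmax_lub_lt; assumption. Qed.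

Lemma SL2_dist_inv g h e : SL2_dist g h < e ->
  Rabs (sa g - sa h) < e /\ Rabs (sb g - sb h) < e /\
  Rabs (sc g - sc h) < e /\ Rabs (sd g - sd h) < e.
Proof.
  unfold SL2_dist; intros H.
  pose proof (Rmax_l (Rmax (Rabs (sa g - sa h)) (Rabs (sb g - sb h)))
       (Rmax (Rabs (sc g - sc h)) (Rabs (sd g - sd h)))).
  pose proof (Rmax_r (Rmax (Rabs (sa g - sa h)) (Rabs (sb g - sb h)))
       (Rmax (Rabs (sc g - sc h)) (Rabs (sd g - sd h)))).
  pose proof (Rmax_l (Rabs (sa g - sa h)) (Rabs (sb g - sb h))).
  pose proof (Rmax_r (Rabs (sa g - sa h)) (Rabs (sb g - sb h))).
  pose proof (Rmax_l (Rabs (sc g - sc h)) (Rabs (sd g - sd h))).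
  pose proof (Rmax_r (Rabs (sc g - sc h)) (Rabs (sd g - sd h))).
  repeat split; lra.
Qed.

Definition coverable (I : Type) (P : SL2 -> Prop) (U : I -> SL2 -> Prop) (T : SL2 -> Prop) :=
  exists l : list I, forall g, P g -> T g -> exists i, In i l /\ U i g.

Lemma cov_split I P U (T T1 T2 : SL2 -> Prop) :
  coverable I P U T1 -> coverable I P U T2 -> (forall g, T g -> T1 g \/ T2 g) ->
  coverable I P U T.
Proof.
  intros [l1 H1] [l2 H2] H. exists (l1 ++ l2). intros g Sg Tg.
  destruct (H g Tg) as [T1g|T2g].
  - destruct (H1 g Sg T1g) as [i [Hi Ui]]. exists i; split; auto; apply in_or_app; auto.
  - destruct (H2 g Sg T2g) as [i [Hi Ui]]. exists i; split; auto; apply in_or_app; auto.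
Qed.

Definition inb (a0 a1 a2 a3 w0 w1 w2 w3 : R) (g : SL2) : Prop :=
  (a0 <= sa g <= a0 + w0) /\ (a1 <= sb g <= a1 + w1) /\
  (a2 <= sc g <= a2 + w2) /\ (a3 <= sd g <= a3 + w3).

Lemma split0 I P U a0 a1 a2 a3 w0 w1 w2 w3 :
  coverable I P U (inb a0 a1 a2 a3 (w0/2) w1 w2 w3) ->
  coverable I P U (inb (a0 + w0/2) a1 a2 a3 (w0/2) w1 w2 w3) ->
  coverable I P U (inb a0 a1 a2 a3 w0 w1 w2 w3).
Proof.
  intros H1 H2; apply (cov_split _ _ _ _ _ _ H1 H2).
  intros g ([? ?] & [? ?] & [? ?] & [? ?]). destruct (Rle_or_lt (sa g) (a0 + w0/2)).
  - left; unfold inb; repeat split; lra.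
  - right; unfold inb; repeat split; lra.
Qed.
Lemma split1 I P U a0 a1 a2 a3 w0 w1 w2 w3 :
  coverable I P U (inb a0 a1 a2 a3 w0 (w1/2) w2 w3) ->
  coverable I P U (inb a0 (a1 + w1/2) a2 a3 w0 (w1/2) w2 w3) ->
  coverable I P U (inb a0 a1 a2 a3 w0 w1 w2 w3).
Proof.
  intros H1 H2; apply (cov_split _ _ _ _ _ _ H1 H2).
  intros g ([? ?] & [? ?] & [? ?] & [? ?]). destruct (Rle_or_lt (sb g) (a1 + w1/2)).
  - left; unfold inb; repeat split; lra.
  - right; unfold inb; repeat split; lra.
Qed.
Lemma split2 I P U a0 a1 a2 a3 w0 w1 w2 w3 :
  coverable I P U (inb a0 a1 a2 a3 w0 w1 (w2/2) w3) ->
  coverable I P U (inb a0 a1 (a2 + w2/2) a3 w0 w1 (w2/2) w3) ->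
  coverable I P U (inb a0 a1 a2 a3 w0 w1 w2 w3).
Proof.
  intros H1 H2; apply (cov_split _ _ _ _ _ _ H1 H2).
  intros g ([? ?] & [? ?] & [? ?] & [? ?]). destruct (Rle_or_lt (sc g) (a2 + w2/2)).
  - left; unfold inb; repeat split; lra.
  - right; unfold inb; repeat split; lra.
Qed.
Lemma split3 I P U a0 a1 a2 a3 w0 w1 w2 w3 :
  coverable I P U (inb a0 a1 a2 a3 w0 w1 w2 (w3/2)) ->
  coverable I P U (inb a0 a1 a2 (a3 + w3/2) w0 w1 w2 (w3/2)) ->
  coverable I P U (inb a0 a1 a2 a3 w0 w1 w2 w3).
Proof.
  intros H1 H2; apply (cov_split _ _ _ _ _ _ H1 H2).
  intros g ([? ?] & [? ?] & [? ?] & [? ?]). destruct (Rle_or_lt (sd g) (a3 + w3/2)).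
  - left; unfold inb; repeat split; lra.
  - right; unfold inb; repeat split; lra.
Qed.

Lemma halve I P U a0 a1 a2 a3 w :
  (forall b0 b1 b2 b3, (b0 = a0 \/ b0 = a0 + w/2) -> (b1 = a1 \/ b1 = a1 + w/2) ->
     (b2 = a2 \/ b2 = a2 + w/2) -> (b3 = a3 \/ b3 = a3 + w/2) ->
     coverable I P U (inb b0 b1 b2 b3 (w/2) (w/2) (w/2) (w/2))) ->
  coverable I P U (inb a0 a1 a2 a3 w w w w).
Proof.
  intros H. apply split0; apply split1; apply split2; apply split3;
  apply H; first [left; reflexivity | right; reflexivity].
Qed.

Record box := mkbox { l0 : R; l1 : R; l2 : R; l3 : R; wb : R }.
Definition inbox (B : box) := inb (l0 B) (l1 B) (l2 B) (l3 B) (wb B) (wb B) (wb B) (wb B).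
Definition Bad I P U B := ~ coverable I P U (inbox B).

Definition good_child (B B' : box) : Prop :=
  wb B' = wb B / 2 /\
  l0 B <= l0 B' /\ l0 B' + wb B' <= l0 B + wb B /\
  l1 B <= l1 B' /\ l1 B' + wb B' <= l1 B + wb B /\
  l2 B <= l2 B' /\ l2 B' + wb B' <= l2 B + wb B /\
  l3 B <= l3 B' /\ l3 B' + wb B' <= l3 B + wb B.

Lemma step_ex I P U (B : box) :
  exists B', (Bad I P U B /\ 0 <= wb B) -> Bad I P U B' /\ good_child B B'.
Proof.
  destruct (classic (Bad I P U B /\ 0 <= wb B)) as [[HB Hw]|HN].
  2: { exists B; intros H; contradiction. }
  apply NNPP; intro Hn.
  apply HB. unfold inbox. apply halve. intros b0 b1 b2 b3 H0 H1 H2 H3.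
  apply NNPP; intro Hc. apply Hn. exists (mkbox b0 b1 b2 b3 (wb B / 2)). intros _. split.
  - exact Hc.
  - unfold good_child; simpl.
    destruct H0 as [H0|H0]; destruct H1 as [H1|H1]; destruct H2 as [H2|H2];
    destruct H3 as [H3|H3]; rewrite H0, H1, H2, H3; repeat split; lra.
Qed.

Definition stepf I P U (B : box) : box :=
  proj1_sig (constructive_indefinite_description _ (step_ex I P U B)).

Lemma stepf_spec I P U B : Bad I P U B -> 0 <= wb B ->
  Bad I P U (stepf I P U B) /\ good_child B (stepf I P U B).
Proof.
  intros. unfold stepf. destruct (constructive_indefinite_description _ _) as [B' HB'].
  simpl. auto.
Qed.

Fixpoint seqb I P U (B0 : box) (n : nat) : box :=
  match n with O => B0 | S n => stepf I P U (seqb I P U B0 n) end.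

Lemma nested_pt (a w : nat -> R) :
  (forall n, 0 <= w n) -> (forall n, a n <= a (S n)) ->
  (forall n, a (S n) + w (S n) <= a n + w n) ->
  exists p, forall n, a n <= p <= a n + w n.
Proof.
  intros Hw Ha Haw.
  assert (Hm : forall m k, a m <= a (m + k)%nat /\ a (m + k)%nat + w (m + k)%nat <= a m + w m).
  { intros m k; induction k as [|k IH].
    - rewrite Nat.add_0_r; lra.
    - rewrite Nat.add_succ_r. specialize (Ha (m + k)%nat). specialize (Haw (m+k)%nat). lra. }
  set (E := fun x => exists n, x = a n).
  assert (Hb : bound E).
  { exists (a 0%nat + w 0%nat). intros x [n ->]. destruct (Hm 0%nat n) as [_ H].
    simpl in H. specialize (Hw n). lra. }
  destruct (completeness E Hb) as [p [Hub Hlub]].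
  { exists (a 0%nat); exists 0%nat; reflexivity. }
  exists p; intros n; split.
  - apply Hub; exists n; reflexivity.
  - apply Hlub. intros x [m ->].
    destruct (Nat.le_gt_cases m n) as [Hle|Hgt].
    + replace n with (m + (n - m))%nat by lia. destruct (Hm m (n - m)%nat). specialize (Hw (m + (n-m))%nat). lra.
    + replace m with (n + (m - n))%nat by lia. destruct (Hm n (m - n)%nat). specialize (Hw (n + (m-n))%nat). lra.
Qed.

Lemma pow2_ge n : INR n + 1 <= 2 ^ n.
Proof. induction n as [|n IH]; [simpl; lra|]. rewrite S_INR. change (2 ^ S n) with (2 * 2 ^ n). pose proof (pos_INR n). lra. Qed.

Lemma small_width W e : e > 0 -> exists n, W / 2 ^ n < e.
Proof.
  intros He. destruct (INR_unbounded (W / e)) as [n Hn]. exists n.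
  pose proof (pow2_ge n). assert (Hp : 0 < 2 ^ n) by (apply pow_lt; lra).
  apply (Rmult_lt_reg_r (2 ^ n)); auto. unfold Rdiv. rewrite Rmult_assoc, Rinv_l by lra.
  rewrite Rmult_1_r. 
  assert (W < e * INR n).
  { apply (Rmult_lt_reg_r (/ e)). apply Rinv_0_lt_compat; lra.
    replace (e * INR n * / e) with (INR n) by (field; lra). unfold Rdiv in Hn. lra. }
  nra.
Qed.

Lemma prod_close x y p q e : Rabs (x - p) < e -> Rabs (y - q) < e -> e <= 1 ->
  Rabs (x * y - p * q) <= (Rabs p + Rabs q + 1) * e.
Proof.
  intros Hx Hy He.
  replace (x * y - p * q) with (x * (y - q) + q * (x - p)) by ring.
  eapply Rle_trans; [apply Rabs_triang|]. rewrite !Rabs_mult.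
  assert (Rabs x <= Rabs p + 1).
  { replace x with (p + (x - p)) by ring. eapply Rle_trans; [apply Rabs_triang|]. lra. }
  pose proof (Rabs_pos x). pose proof (Rabs_pos q). pose proof (Rabs_pos (y - q)).
  pose proof (Rabs_pos (x - p)).
  assert (Rabs x * Rabs (y - q) <= (Rabs p + 1) * e) by (apply Rmult_le_compat; lra).
  assert (Rabs q * Rabs (x - p) <= Rabs q * e) by (apply Rmult_le_compat; lra).
  lra.
Qed.

Lemma det_limit p0 p1 p2 p3 :
  (forall e, e > 0 -> exists g : SL2, Rabs (sa g - p0) < e /\ Rabs (sb g - p1) < e /\
     Rabs (sc g - p2) < e /\ Rabs (sd g - p3) < e) -> p0 * p3 - p1 * p2 = 1.
Proof.
  intros H. apply NNPP; intro Hne.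
  set (D := Rabs (p0 * p3 - p1 * p2 - 1)).
  assert (HD : D > 0) by (apply Rabs_pos_lt; lra).
  set (K := Rabs p0 + Rabs p1 + Rabs p2 + Rabs p3 + 2).
  assert (HK : K > 0) by (unfold K; pose proof (Rabs_pos p0); pose proof (Rabs_pos p1);
      pose proof (Rabs_pos p2); pose proof (Rabs_pos p3); lra).
  set (e := Rmin 1 (D / (2 * K))).
  assert (He : e > 0) by (unfold e; apply Rmin_pos; [lra| apply Rdiv_lt_0_compat; lra]).
  assert (He1 : e <= 1) by apply Rmin_l.
  assert (He2 : e * K <= D / 2).
  { assert (e <= D / (2 * K)) by apply Rmin_r.
    replace (D / 2) with (D / (2 * K) * K) by (field; lra).
    apply Rmult_le_compat_r; lra. }
  destruct (H e He) as [g (Ha & Hb & Hc & Hd)].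
  pose proof (prod_close _ _ _ _ _ Ha Hd He1).
  pose proof (prod_close _ _ _ _ _ Hb Hc He1).
  pose proof (sdet g).
  assert (D <= Rabs (sa g * sd g - p0 * p3) + Rabs (sb g * sc g - p1 * p2)).
  { unfold D. replace (p0 * p3 - p1 * p2 - 1) with
    (- (sa g * sd g - p0 * p3) + (sb g * sc g - p1 * p2)) by lra.
    eapply Rle_trans; [apply Rabs_triang|]. rewrite Rabs_Ropp. lra. }
  assert ((Rabs p0 + Rabs p3 + 1) * e + (Rabs p1 + Rabs p2 + 1) * e = e * K) by (unfold K; ring).
  lra.
Qed.

Lemma HB (P : SL2 -> Prop) (M : R) :
  (forall g, P g -> Rabs (sa g) <= M /\ Rabs (sb g) <= M /\ Rabs (sc g) <= M /\ Rabs (sd g) <= M) ->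
  (forall g, (forall e, e > 0 -> exists h, P h /\ SL2_dist g h < e) -> P g) ->
  SL2_compact P.
Proof.
  intros Hbd Hcl I U Hop Hcov.
  apply NNPP; intro Hnf.
  set (M' := Rabs M). assert (HM' : 0 <= M') by apply Rabs_pos.
  set (B0 := mkbox (-M') (-M') (-M') (-M') (2*M')).
  assert (HB0 : Bad I P U B0).
  { intros [l Hl]. apply Hnf. exists l. intros g Pg. apply Hl; auto.
    pose proof (RRle_abs M).
    destruct (Hbd g Pg) as (H1&H2&H3&H4).
    apply abs_le_inv in H1; apply abs_le_inv in H2; apply abs_le_inv in H3; apply abs_le_inv in H4.
    unfold inbox, inb; simpl. unfold M'. repeat split; lra. }
  set (Q := seqb I P U B0).
  assert (Hinv : forall n, Bad I P U (Q n) /\ 0 <= wb (Q n) /\ wb (Q n) = 2 * M' / 2 ^ n).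
  { induction n as [|n IH].
    - simpl. split; [exact HB0|]. split; [lra|]. field.
    - destruct IH as (Hb & Hw & Hweq). destruct (stepf_spec I P U (Q n) Hb Hw) as [Hb' Hc].
      change (Q (S n)) with (stepf I P U (Q n)).
      destruct Hc as [Hw' _]. split; auto. rewrite Hw', Hweq. split.
      + lra.
      + change (2 ^ S n) with (2 * 2 ^ n). field. apply pow_nonzero; lra. }
  assert (Hch : forall n, good_child (Q n) (Q (S n))).
  { intros n. destruct (Hinv n) as (Hb & Hw & _). apply (stepf_spec I P U (Q n) Hb Hw). }
  assert (Hw : forall n, 0 <= wb (Q n)) by (intro n; apply (Hinv n)).
  destruct (nested_pt (fun n => l0 (Q n)) (fun n => wb (Q n)) Hw) as [p0 Hp0];
    try (intro n; destruct (Hch n) as (?&?&?&?&?&?&?&?&?); assumption).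
  destruct (nested_pt (fun n => l1 (Q n)) (fun n => wb (Q n)) Hw) as [p1 Hp1];
    try (intro n; destruct (Hch n) as (?&?&?&?&?&?&?&?&?); assumption).
  destruct (nested_pt (fun n => l2 (Q n)) (fun n => wb (Q n)) Hw) as [p2 Hp2];
    try (intro n; destruct (Hch n) as (?&?&?&?&?&?&?&?&?); assumption).
  destruct (nested_pt (fun n => l3 (Q n)) (fun n => wb (Q n)) Hw) as [p3 Hp3];
    try (intro n; destruct (Hch n) as (?&?&?&?&?&?&?&?&?); assumption).
  assert (Hne : forall n, exists g, P g /\ inbox (Q n) g).
  { intros n. apply NNPP; intro Hn. apply (proj1 (Hinv n)). exists nil.
    intros g Pg Ig. exfalso. apply Hn. exists g; auto. }
  assert (Hclose : forall n g, inbox (Q n) g ->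
     Rabs (sa g - p0) <= wb (Q n) /\ Rabs (sb g - p1) <= wb (Q n) /\
     Rabs (sc g - p2) <= wb (Q n) /\ Rabs (sd g - p3) <= wb (Q n)).
  { intros n g ([? ?] & [? ?] & [? ?] & [? ?]).
    specialize (Hp0 n); specialize (Hp1 n); specialize (Hp2 n); specialize (Hp3 n); simpl in *.
    repeat split; apply abs_le; lra. }
  assert (Happ : forall e, e > 0 -> exists n, wb (Q n) < e).
  { intros e He. destruct (small_width (2 * M') e He) as [n Hn]. exists n.
    rewrite (proj2 (proj2 (Hinv n))). exact Hn. }
  assert (Hdet : p0 * p3 - p1 * p2 = 1).
  { apply det_limit. intros e He. destruct (Happ e He) as [n Hn].
    destruct (Hne n) as [g [Pg Ig]]. exists g.
    destruct (Hclose n g Ig) as (?&?&?&?). repeat split; lra. }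
  set (pg := mkSL2 p0 p1 p2 p3 Hdet).
  assert (Hball : forall n g, inbox (Q n) g -> SL2_dist pg g <= wb (Q n)).
  { intros n g Ig. destruct (Hclose n g Ig) as (?&?&?&?). unfold SL2_dist; simpl.
    rewrite (Rabs_minus_sym p0), (Rabs_minus_sym p1), (Rabs_minus_sym p2), (Rabs_minus_sym p3).
    repeat apply Rmax_lub; assumption. }
  assert (Ppg : P pg).
  { apply Hcl. intros e He. destruct (Happ e He) as [n Hn].
    destruct (Hne n) as [g [Pg Ig]]. exists g. split; auto.
    pose proof (Hball n g Ig). lra. }
  destruct (Hcov pg Ppg) as [i Ui].
  destruct (Hop i pg Ui) as [e [He Hb]].
  destruct (Happ e He) as [n Hn].
  apply (proj1 (Hinv n)). exists (i :: nil). intros g Pg Ig.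
  exists i. split; [left; reflexivity|]. apply Hb. pose proof (Hball n g Ig). lra.
Qed.

Lemma uu_det s : 1 * 1 - s * 0 = 1. Proof. ring. Qed.
Definition uu s := mkSL2 1 s 0 1 (uu_det s).
Lemma ll_det c : 1 * 1 - 0 * c = 1. Proof. ring. Qed.
Definition ll c := mkSL2 1 0 c 1 (ll_det c).
Lemma dg_det a : a <> 0 -> a * / a - 0 * 0 = 1. Proof. intros; field; auto. Qed.
Definition dg a (Ha : a <> 0) := mkSL2 a 0 0 (/ a) (dg_det a Ha).
Lemma inv_det g : sd g * sa g - (- sb g) * (- sc g) = 1.
Proof. pose proof (sdet g). lra. Qed.
Definition inv g := mkSL2 (sd g) (- sb g) (- sc g) (sa g) (inv_det g).

Lemma actM {X} (dist : X -> X -> R) act (Hact : is_cont_isom_action dist act) g h x :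
  act g (act h x) = act (SL2_mul g h) x.
Proof. symmetry; apply (act_mul _ _ Hact). Qed.

Lemma inv_l g : SL2_mul (inv g) g = SL2_one.
Proof. pose proof (sdet g). apply SL2_ext; simpl; lra. Qed.
Lemma inv_r g : SL2_mul g (inv g) = SL2_one.
Proof. pose proof (sdet g). apply SL2_ext; simpl; lra. Qed.

Lemma dist_small {X} (dist : X -> X -> R) (Hmet : is_metric dist) x y :
  (forall e, e > 0 -> dist x y < e) -> x = y.
Proof.
  intros H. apply (Defs.dist_eq0 _ Hmet). pose proof (Defs.dist_nonneg _ Hmet x y).
  destruct (Rle_lt_or_eq_dec _ _ H0) as [Hlt|Heq]; auto.
  specialize (H (dist x y / 2)). lra.
Qed.

Lemma dc_alg a b c d a' b' d' : c <> 0 -> a*d - b*c = 1 -> a'*d' - b'*c = 1 ->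
  a' * ((d - d')/c) + b' + (a - a')/c * (c * ((d-d')/c) + d') = b.
Proof.
  intros Hc H1 H2. apply (Rmult_eq_reg_r c); [|auto]. field_simplify; [|auto]. nra.
Qed.


Lemma dc {X : Type} (dist : X -> X -> R) (act : SL2 -> X -> X) (Hmet : is_metric dist) (Hact : is_cont_isom_action dist act) z (HN : forall s, act (uu s) z = z) g g' :
  sc g = sc g' -> sc g <> 0 -> dist (act g z) z = dist (act g' z) z.
Proof.
  intros Hc Hc0.
  set (x := (sa g - sa g') / sc g). set (y := (sd g - sd g') / sc g).
  assert (Hg : g = SL2_mul (uu x) (SL2_mul g' (uu y))).
  { pose proof (sdet g) as D1. pose proof (sdet g') as D2. rewrite <- Hc in D2.
    apply SL2_ext; simpl; unfold x, y; rewrite <- ?Hc.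
    - field; auto.
    - symmetry. ring_simplify. 
      pose proof (dc_alg (sa g) (sb g) (sc g) (sd g) (sa g') (sb g') (sd g') Hc0 D1 D2). lra.
    - ring.
    - field; auto. }
  rewrite Hg. rewrite <- !(actM dist act Hact). rewrite HN.
  rewrite <- (HN x) at 2. apply (act_isom _ _ Hact).
Qed.

Lemma cont_at {X : Type} (dist : X -> X -> R) (act : SL2 -> X -> X) (Hmet : is_metric dist) (Hact : is_cont_isom_action dist act) g x e : e > 0 -> exists d, d > 0 /\ forall h, SL2_dist g h < d -> dist (act g x) (act h x) < e.
Proof.
  intros He. destruct (act_cont _ _ Hact g x e He) as [d [Hd H]]. exists d; split; auto.
  intros h Hh. apply H; auto. rewrite (proj2 (Defs.dist_eq0 _ Hmet x x) eq_refl). lra.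
Qed.

Lemma fix_all {X : Type} (dist : X -> X -> R) (act : SL2 -> X -> X) (Hmet : is_metric dist) (Hact : is_cont_isom_action dist act) z (HN : forall s, act (uu s) z = z) : forall g, act g z = z.
Proof.
  assert (Hdg : forall a (Ha : a <> 0), act (dg a Ha) z = z).
  { intros a Ha. apply (dist_small dist Hmet). intros e He.
    assert (He2 : e / 2 > 0) by lra.
    destruct (cont_at dist act Hmet Hact (dg a Ha) z (e/2) He2) as [d1 [Hd1 H1]].
    destruct (cont_at dist act Hmet Hact SL2_one z (e/2) He2) as [d2 [Hd2 H2]].
    set (c := Rmin d1 d2 / 2).
    assert (Hc : 0 < c) by (unfold c; pose proof (Rmin_pos d1 d2 Hd1 Hd2); lra).
    assert (Hc1 : c < d1) by (unfold c; pose proof (Rmin_l d1 d2); lra).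
    assert (Hc2 : c < d2) by (unfold c; pose proof (Rmin_r d1 d2); lra).
    assert (Dgc : a * / a - 0 * c = 1) by (field; auto).
    set (gc := mkSL2 a 0 c (/ a) Dgc).
    assert (E1 : dist (act (dg a Ha) z) (act gc z) < e / 2).
    { apply H1. apply SL2_dist_lt; simpl; apply abs_lt; lra. }
    assert (E2 : dist (act SL2_one z) (act (ll c) z) < e / 2).
    { apply H2. apply SL2_dist_lt; simpl; apply abs_lt; lra. }
    rewrite (act_one _ _ Hact) in E2.
    assert (E3 : dist (act gc z) z = dist (act (ll c) z) z) by (apply (dc dist act Hmet Hact); simpl; auto; lra).
    rewrite (Defs.dist_sym _ Hmet) in E2.
    pose proof (Defs.dist_tri _ Hmet (act (dg a Ha) z) (act gc z) z). lra. }
  assert (Hl : forall c, act (ll c) z = z).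
  { intros c. destruct (Req_dec c 0) as [->|Hc0].
    - replace (ll 0) with SL2_one by (apply SL2_ext; reflexivity). apply (act_one _ _ Hact).
    - apply (dist_small dist Hmet). intros e He.
      destruct (cont_at dist act Hmet Hact SL2_one z e He) as [d2 [Hd2 H2]].
      set (c' := Rmin d2 1 / 2).
      assert (Hc : 0 < c') by (unfold c'; pose proof (Rmin_pos d2 1 Hd2 Rlt_0_1); lra).
      assert (Hc2 : c' < d2) by (unfold c'; pose proof (Rmin_l d2 1); lra).
      assert (Ha : c / c' <> 0) by (unfold Rdiv; apply Rmult_integral_contrapositive_currified;
        [auto | apply Rinv_neq_0_compat; lra]).
      rewrite (dc dist act Hmet Hact z HN (ll c) (SL2_mul (ll c') (dg (c / c') Ha))).
      2: { simpl. field. lra. }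
      2: { simpl. auto. }
      rewrite <- (actM dist act Hact), Hdg.
      assert (E2 : dist (act SL2_one z) (act (ll c') z) < e).
      { apply H2. apply SL2_dist_lt; simpl; apply abs_lt; lra. }
      rewrite (act_one _ _ Hact), (Defs.dist_sym _ Hmet) in E2. exact E2. }
  assert (Hnz : forall g, sc g <> 0 -> act g z = z).
  { intros g Hg. apply (Defs.dist_eq0 _ Hmet). rewrite (dc dist act Hmet Hact z HN g (ll (sc g))); auto.
    rewrite Hl. apply (Defs.dist_eq0 _ Hmet). reflexivity. }
  intros g. destruct (Req_dec (sc g) 0) as [H0|H0]; [|auto].
  assert (Hd : sd g <> 0) by (pose proof (sdet g); intro; rewrite H0 in *; nra).
  replace g with (SL2_mul (SL2_mul g (ll 1)) (ll (-1))).
  2: { apply SL2_ext; simpl; ring. }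
  rewrite <- (actM dist act Hact), Hl. apply Hnz. simpl. rewrite H0. lra.
Qed.


Definition rot (k : SL2) := sa k = sd k /\ sb k = - sc k.

Lemma qr_fix {X : Type} (dist : X -> X -> R) (act : SL2 -> X -> X) (Hmet : is_metric dist)
  (Hact : is_cont_isom_action dist act) p g :
  act g p = p -> sa g ^ 2 + sc g ^ 2 > 0 ->
  exists k, rot k /\ forall s, dist (act (uu s) (act k p)) (act k p) =
     dist (act (uu (s / (sa g ^ 2 + sc g ^ 2))) p) p.
Proof.
  intros Hg Hr2. set (r2 := sa g ^ 2 + sc g ^ 2) in *.
  set (r := sqrt r2).
  assert (Hrr : r * r = r2) by (apply sqrt_sqrt; lra).
  assert (Hr : r > 0) by (apply sqrt_lt_R0; lra).
  assert (Hr0 : r <> 0) by lra.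
  assert (Dk : (sa g / r) * (sa g / r) - (sc g / r) * (- sc g / r) = 1).
  { replace ((sa g / r) * (sa g / r) - (sc g / r) * (- sc g / r)) with (r2 / (r * r))
      by (unfold r2; field; auto). rewrite Hrr. field. lra. }
  set (kinv := mkSL2 (sa g / r) (sc g / r) (- sc g / r) (sa g / r) Dk).
  set (m := sa g * sb g + sc g * sd g).
  set (Bm := SL2_mul (uu m) (dg r Hr0)).
  pose proof (sdet g) as Dg.
  assert (E1 : SL2_mul kinv g = Bm).
  { apply SL2_ext; simpl.
    - replace (sa g / r * sa g + sc g / r * sc g) with (r2 / r) by (unfold r2; field; auto).
      rewrite <- Hrr. field. auto.
    - unfold m. field. auto.
    - field. auto.
    - replace (- sc g / r * sb g + sa g / r * sd g) with ((sa g * sd g - sb g * sc g)/r)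
        by (field; auto). rewrite Dg. field. auto. }
  assert (E2 : forall s, SL2_mul (uu s) Bm = SL2_mul Bm (uu (s / r2))).
  { intros s. apply SL2_ext; simpl; try ring.
    rewrite <- Hrr. field. auto. }
  exists kinv. split.
  - unfold rot; simpl. split; [reflexivity| field; auto].
  - intros s.
    assert (Hz : act kinv p = act Bm p).
    { rewrite <- E1, <- (actM dist act Hact), Hg. reflexivity. }
    rewrite Hz, (actM dist act Hact), E2, <- (actM dist act Hact).
    apply (act_isom _ _ Hact).
Qed.

Lemma w1_det : 0 * 0 - (-1) * 1 = 1. Proof. ring. Qed.
Definition w1 := mkSL2 0 (-1) 1 0 w1_det.
Lemma w1i_det : 0 * 0 - 1 * (-1) = 1. Proof. ring. Qed.
Definition w1i := mkSL2 0 1 (-1) 0 w1i_det.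

Lemma cont_u {X : Type} (dist : X -> X -> R) (act : SL2 -> X -> X) (Hmet : is_metric dist)
  (Hact : is_cont_isom_action dist act) p e :
  e > 0 -> exists d, d > 0 /\ forall t, Rabs t < d -> dist (act (uu t) p) p < e.
Proof.
  intros He. destruct (cont_at dist act Hmet Hact SL2_one p e He) as [d [Hd H]].
  exists d; split; auto. intros t Ht.
  assert (E : dist (act SL2_one p) (act (uu t) p) < e).
  { apply H. apply SL2_dist_lt; simpl; apply abs_lt; apply abs_lt_inv in Ht; lra. }
  rewrite (act_one _ _ Hact), (Defs.dist_sym _ Hmet) in E. exact E.
Qed.

Definition Cn {X : Type} (dist : X -> X -> R) (act : SL2 -> X -> X) x0 (n : nat) (k : SL2) :=
  rot k /\ forall s, Rabs s <= INR n ->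
    dist (act (uu s) (act k x0)) (act k x0) <= / (INR n + 1).

Lemma Cn_nonempty {X : Type} (dist : X -> X -> R) (act : SL2 -> X -> X) (Hmet : is_metric dist)
  (Hact : is_cont_isom_action dist act) x0 :
  ~ (exists M, forall g, act g x0 = x0 ->
       Rabs (sa g) <= M /\ Rabs (sb g) <= M /\ Rabs (sc g) <= M /\ Rabs (sd g) <= M) ->
  forall n, exists k, Cn dist act x0 n k.
Proof.
  intros Hub n.
  set (e := / (INR n + 1)).
  assert (He : e > 0) by (unfold e; apply Rinv_0_lt_compat; pose proof (pos_INR n); lra).
  set (x1 := act w1i x0).
  destruct (cont_u dist act Hmet Hact x0 e He) as [d1 [Hd1 H1]].
  destruct (cont_u dist act Hmet Hact x1 e He) as [d2 [Hd2 H2]].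
  set (d := Rmin d1 d2).
  assert (Hd : d > 0) by (apply Rmin_pos; auto).
  assert (Hdd1 : d <= d1) by apply Rmin_l. assert (Hdd2 : d <= d2) by apply Rmin_r.
  set (R0 := INR n / d + 1).
  assert (HR0 : d * R0 = INR n + d) by (unfold R0; field; lra).
  assert (HR1 : R0 >= 1) by (unfold R0; pose proof (pos_INR n);
     assert (0 <= INR n / d) by (unfold Rdiv; apply Rmult_le_pos; [lra| left; apply Rinv_0_lt_compat; lra]); lra).
  assert (Key : forall r2 s, r2 > R0 -> Rabs s <= INR n -> Rabs (s / r2) < d).
  { intros r2 s Hr2 Hs. apply abs_le_inv in Hs. apply abs_lt.
    assert (Hq : s / r2 * r2 = s) by (field; lra).
    set (q := s / r2) in *. split; nra. }
  assert (Hsq : forall x, Rabs x > R0 -> x ^ 2 > R0).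
  { intros x Hx. rewrite <- pow2_abs. nra. }
  pose proof (not_ex_all_not _ _ Hub R0) as Hn.
  apply not_all_ex_not in Hn. destruct Hn as [h Hh].
  apply imply_to_and in Hh. destruct Hh as [Hfix Hnb].
  assert (Hcase : Rabs (sa h) > R0 \/ Rabs (sc h) > R0 \/ Rabs (sb h) > R0 \/ Rabs (sd h) > R0).
  { destruct (Rle_or_lt (Rabs (sa h)) R0); [|left; lra].
    destruct (Rle_or_lt (Rabs (sb h)) R0); [|right; right; left; lra].
    destruct (Rle_or_lt (Rabs (sc h)) R0); [|right; left; lra].
    destruct (Rle_or_lt (Rabs (sd h)) R0); [|right; right; right; lra].
    exfalso; apply Hnb; auto. }
  assert (Hcol1 : Rabs (sa h) > R0 \/ Rabs (sc h) > R0 -> exists k, Cn dist act x0 n k).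
  { intros Hc.
    assert (Hr2 : sa h ^ 2 + sc h ^ 2 > R0).
    { pose proof (pow2_ge_0 (sa h)). pose proof (pow2_ge_0 (sc h)).
      destruct Hc as [Hc|Hc]; apply Hsq in Hc; lra. }
    destruct (qr_fix dist act Hmet Hact x0 h Hfix ltac:(lra)) as [k [Hk Heq]].
    exists k. split; auto. intros s Hs. rewrite Heq. left. apply H1.
    apply Rlt_le_trans with d; auto. }
  destruct Hcase as [Hc|[Hc|Hc]]; [apply Hcol1; auto | apply Hcol1; auto |];
  set (h' := SL2_mul w1i (SL2_mul h w1));
  assert (Hfix' : act h' x1 = x1) by
   (unfold h', x1; rewrite <- !(actM dist act Hact);
    rewrite (actM dist act Hact w1 w1i);
    replace (SL2_mul w1 w1i) with SL2_one by (apply SL2_ext; simpl; ring);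
    rewrite (act_one _ _ Hact), Hfix; reflexivity);
  assert (Hr2 : sa h' ^ 2 + sc h' ^ 2 > R0) by
   (replace (sa h' ^ 2 + sc h' ^ 2) with (sd h ^ 2 + sb h ^ 2) by (unfold h'; simpl; ring);
    pose proof (pow2_ge_0 (sb h)); pose proof (pow2_ge_0 (sd h));
    try (destruct Hc as [Hc|Hc]); apply Hsq in Hc; lra);
  destruct (qr_fix dist act Hmet Hact x1 h' Hfix' ltac:(lra)) as [k [Hk Heq]];
  exists (SL2_mul k w1i);
  (split; [unfold rot in *; simpl; destruct Hk; lra|]);
  intros s Hs;
  (replace (act (SL2_mul k w1i) x0) with (act k x1)
     by (unfold x1; apply (actM dist act Hact)));
  rewrite Heq; left; apply H2; apply Rlt_le_trans with d; auto.
Qed.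

Lemma zero_small x : (forall e, e > 0 -> Rabs x < e) -> x = 0.
Proof.
  intros H. apply NNPP; intro Hx. pose proof (Rabs_pos_lt x Hx).
  specialize (H (Rabs x) H0). lra.
Qed.

Lemma le_small D b : (forall e, e > 0 -> D < b + e) -> D <= b.
Proof. intros H. destruct (Rle_or_lt D b); auto. specialize (H (D - b)). lra. Qed.

Lemma Cn_mono {X : Type} (dist : X -> X -> R) act x0 n m k :
  Cn dist act x0 n k -> (m <= n)%nat -> Cn dist act x0 m k.
Proof.
  intros [Hr H] Hmn. split; auto. intros s Hs.
  assert (INR m <= INR n) by (apply le_INR; auto).
  eapply Rle_trans; [apply H; lra|].
  apply Rinv_le_contravar; pose proof (pos_INR m); lra.
Qed.

Lemma rot_closed k : (forall e, e > 0 -> exists k', rot k' /\ SL2_dist k k' < e) -> rot k.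
Proof.
  intros H. split.
  - assert (sa k - sd k = 0); [|lra]. apply zero_small. intros e He.
    destruct (H (e/2)) as [k' [[Ha Hb] Hd]]; [lra|].
    apply SL2_dist_inv in Hd. destruct Hd as (H1&H2&H3&H4).
    apply abs_lt_inv in H1; apply abs_lt_inv in H4. apply abs_lt. lra.
  - assert (sb k + sc k = 0); [|lra]. apply zero_small. intros e He.
    destruct (H (e/2)) as [k' [[Ha Hb] Hd]]; [lra|].
    apply SL2_dist_inv in Hd. destruct Hd as (H1&H2&H3&H4).
    apply abs_lt_inv in H2; apply abs_lt_inv in H3. apply abs_lt. lra.
Qed.

Lemma Cn_closed {X : Type} (dist : X -> X -> R) (act : SL2 -> X -> X) (Hmet : is_metric dist)
  (Hact : is_cont_isom_action dist act) x0 n k :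
  (forall e, e > 0 -> exists k', Cn dist act x0 n k' /\ SL2_dist k k' < e) -> Cn dist act x0 n k.
Proof.
  intros H. split.
  - apply rot_closed. intros e He. destruct (H e He) as [k' [[Hr _] Hd]]. eauto.
  - intros s Hs. apply le_small. intros e He.
    assert (He2 : e / 2 > 0) by lra.
    destruct (cont_at dist act Hmet Hact k x0 (e/2) He2) as [d [Hd Hc]].
    destruct (H d Hd) as [k' [[_ Hk'] Hdk]].
    specialize (Hc k' Hdk). specialize (Hk' s Hs).
    set (z := act k x0) in *. set (z' := act k' x0) in *.
    pose proof (Defs.dist_tri _ Hmet (act (uu s) z) (act (uu s) z') z).
    pose proof (Defs.dist_tri _ Hmet (act (uu s) z') z' z).
    rewrite (act_isom _ _ Hact) in H0.
    rewrite (Defs.dist_sym _ Hmet z' z) in H1.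
    lra.
Qed.

Lemma sq_abs_le x y : x * x + y * y = 1 -> Rabs x <= 1.
Proof. intros H. apply abs_le. split; nra. Qed.

Lemma in_le_max (l : list nat) i : In i l -> (i <= fold_right max 0%nat l)%nat.
Proof.
  induction l as [|a l IH]; simpl; [tauto|]. intros [->|Hi]; [lia|]. specialize (IH Hi). lia.
Qed.

Lemma cantor {X : Type} (dist : X -> X -> R) (act : SL2 -> X -> X) (Hmet : is_metric dist)
  (Hact : is_cont_isom_action dist act) x0 :
  (forall n, exists k, Cn dist act x0 n k) -> exists k, forall n, Cn dist act x0 n k.
Proof.
  intros Hne. apply NNPP; intro Hno.
  assert (Hc : SL2_compact rot).
  { apply (HB rot 1).
    - intros g [Had Hbc]. pose proof (sdet g) as D. rewrite <- Had, Hbc in D.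
      assert (D' : sa g * sa g + sc g * sc g = 1) by lra.
      assert (D'' : sc g * sc g + sa g * sa g = 1) by lra.
      pose proof (sq_abs_le _ _ D'). pose proof (sq_abs_le _ _ D'').
      rewrite <- Had, Hbc, Rabs_Ropp. repeat split; auto.
    - intros g Hg. apply rot_closed. intros e He. destruct (Hg e He) as [h [Hh Hd]]. eauto. }
  destruct (Hc nat (fun n g => ~ Cn dist act x0 n g)) as [l Hl].
  - intros n g Hg. apply NNPP; intro Hno'. apply Hg. apply (Cn_closed dist act Hmet Hact).
    intros e He. apply NNPP; intro Hx. apply Hno'. exists e. split; auto.
    intros h Hh HC. apply Hx. exists h; auto.
  - intros g Hg. pose proof (not_ex_all_not _ _ Hno g) as H. apply not_all_ex_not in H. exact H.
  - destruct (Hne (fold_right max 0%nat l)) as [k Hk].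
    destruct (Hl k (proj1 Hk)) as [i [Hi Hni]].
    apply Hni. apply (Cn_mono dist act x0 _ _ _ Hk). apply in_le_max; auto.
Qed.

Theorem theorem1p5 (X : Type) (dist : X -> X -> R) (act : SL2 -> X -> X) (x0 : X)
  (Hmet : is_metric dist) (Hact : is_cont_isom_action dist act) :
  (forall g : SL2, act g x0 = x0) \/ SL2_compact (stabilizer act x0).
Proof.
  destruct (classic (exists M, forall g, act g x0 = x0 ->
       Rabs (sa g) <= M /\ Rabs (sb g) <= M /\ Rabs (sc g) <= M /\ Rabs (sd g) <= M))
    as [[M HM]|Hub].
  - right. apply (HB _ M).
    + exact HM.
    + intros g Hg. unfold stabilizer. apply (dist_small dist Hmet). intros e He.
      destruct (cont_at dist act Hmet Hact g x0 e He) as [d [Hd Hc]].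
      destruct (Hg d Hd) as [h [Hh Hdh]]. specialize (Hc h Hdh).
      unfold stabilizer in Hh. rewrite Hh in Hc. exact Hc.
  - left.
    destruct (cantor dist act Hmet Hact x0 (Cn_nonempty dist act Hmet Hact x0 Hub)) as [k Hk].
    set (z := act k x0).
    assert (HN : forall s, act (uu s) z = z).
    { intros s. apply (dist_small dist Hmet). intros e He.
      destruct (INR_unbounded (Rabs s + / e)) as [n Hn].
      destruct (Hk n) as [_ Hb].
      assert (Hs : Rabs s <= INR n).
      { pose proof (Rinv_0_lt_compat e He). lra. }
      specialize (Hb s Hs). fold z in Hb.
      assert (/ (INR n + 1) < e).
      { pose proof (Rabs_pos s). pose proof (Rinv_0_lt_compat e He).
        rewrite <- (Rinv_inv e). apply Rinv_lt_contravar; [|lra].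
        apply Rmult_lt_0_compat; lra. }
      lra. }
    pose proof (fix_all dist act Hmet Hact z HN) as Hall.
    assert (Hx0 : act (inv k) z = x0).
    { unfold z. rewrite (actM dist act Hact), inv_l. apply (act_one _ _ Hact). }
    assert (Hxz : x0 = z) by (rewrite <- Hx0; apply Hall).
    intros g. rewrite Hxz. apply Hall.
Qed.
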